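(* Let $\varphi : X \to Y$ be a morphism in $\mathscr{C}$ with cokernel $\lambda : Y\to L$. Then $\varphi$ is $\{1,4\}$-invertible if and only if $\varphi$ is regular and $\lambda^{*}\lambda : L\to L$ is invertible. In this case, for every $\psi : Y\to X$ with $\varphi\psi\varphi=\varphi$, $$[1_Y-\lambda(\lambda^{*}\lambda)^{-1}\lambda^{*}]\,\psi$$ is a $\{1,4\}$-inverse of $\varphi$.
   Context: $\mathscr{C}$ is an additive category with an involution $*$: a map on morphisms sending $\varphi : X\to Y$ to $\varphi^* : Y \to X$ such that $(\varphi^* )^*=\varphi$, $(\varphi\psi)^*=\psi^*\varphi^*$ and $(\varphi+\phi)^*=\varphi^*+\phi^*$. Composition is written left to right: for $\varphi : X\to Y$ and $\psi : Y\to Z$, $\varphi\psi : X \to Z$ means ''first $\varphi$, then $\psi$''. A cokernel of $\varphi : X\to Y$ is a morphism $\lambda : Y\to L$ with $\varphi\lambda=0$ such that every $\beta : Y\to M$ with $\varphi\beta=0$ factors uniquely as $\beta=\lambda\beta'$. $\varphi$ is regular if there is $\chi : Y\to X$ with $\varphi\chi\varphi=\varphi$. A $\{1,4\}$-inverse of $\varphi$ is a morphism $\chi : Y\to X$ with $\varphi\chi\varphi=\varphi$ and $(\chi\varphi)^*=\chi\varphi$. A morphism is invertible if it has a two-sided inverse. *)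

(* Defs.v *)
From HB Require Import structures.
From mathcomp Require Export all_boot ssralg.
Set Implicit Arguments. Unset Strict Implicit. Unset Printing Implicit Defensive.
Import GRing.Theory.
Local Open Scope ring_scope.

(* An additive category with involution, composition written LEFT TO RIGHT:
   cmp f g : X -> Z for f : X -> Y, g : Y -> Z means "first f, then g". *)
Record AddCatInv := {
  Ob :> Type;
  Mor : Ob -> Ob -> zmodType;
  cmp : forall X Y Z : Ob, Mor X Y -> Mor Y Z -> Mor X Z;
  idm : forall X : Ob, Mor X X;
  adj : forall X Y : Ob, Mor X Y -> Mor Y X;
  compA : forall X Y Z W (f : Mor X Y) (g : Mor Y Z) (h : Mor Z W),
      cmp f (cmp g h) = cmp (cmp f g) h;
  comp1m : forall X Y (f : Mor X Y), cmp (idm X) f = f;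
  compm1 : forall X Y (f : Mor X Y), cmp f (idm Y) = f;
  compDl : forall X Y Z (f f' : Mor X Y) (g : Mor Y Z),
      cmp (f + f') g = cmp f g + cmp f' g;
  compDr : forall X Y Z (f : Mor X Y) (g g' : Mor Y Z),
      cmp f (g + g') = cmp f g + cmp f g';
  zob : Ob;
  zob_id : idm zob = 0;
  bip : Ob -> Ob -> Ob;
  bip_in1 : forall X Y, Mor X (bip X Y);
  bip_in2 : forall X Y, Mor Y (bip X Y);
  bip_pr1 : forall X Y, Mor (bip X Y) X;
  bip_pr2 : forall X Y, Mor (bip X Y) Y;
  bip_in1pr1 : forall X Y, cmp (bip_in1 X Y) (bip_pr1 X Y) = idm X;
  bip_in2pr2 : forall X Y, cmp (bip_in2 X Y) (bip_pr2 X Y) = idm Y;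
  bip_in1pr2 : forall X Y, cmp (bip_in1 X Y) (bip_pr2 X Y) = 0;
  bip_in2pr1 : forall X Y, cmp (bip_in2 X Y) (bip_pr1 X Y) = 0;
  bip_sum : forall X Y, cmp (bip_pr1 X Y) (bip_in1 X Y)
                        + cmp (bip_pr2 X Y) (bip_in2 X Y) = idm (bip X Y);
  starK : forall X Y (f : Mor X Y), adj (adj f) = f;
  star_comp : forall X Y Z (f : Mor X Y) (g : Mor Y Z),
      adj (cmp f g) = cmp (adj g) (adj f);
  starD : forall X Y (f g : Mor X Y), adj (f + g) = adj f + adj g
}.

Arguments cmp {C X Y Z} : rename.
Arguments idm {C} X : rename.
Arguments adj {C X Y} : rename.

Section Defs.
Variable C : AddCatInv.

Definition is_cokernel (X Y L : C) (phi : Mor X Y) (lam : Mor Y L) : Prop :=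
  cmp phi lam = 0 /\
  forall (M : C) (beta : Mor Y M), cmp phi beta = 0 ->
    exists! beta' : Mor L M, beta = cmp lam beta'.

Definition regular (X Y : C) (phi : Mor X Y) : Prop :=
  exists chi : Mor Y X, cmp (cmp phi chi) phi = phi.

Definition inverse14 (X Y : C) (phi : Mor X Y) (chi : Mor Y X) : Prop :=
  cmp (cmp phi chi) phi = phi /\ adj (cmp chi phi) = cmp chi phi.

Definition invertible14 (X Y : C) (phi : Mor X Y) : Prop :=
  exists chi : Mor Y X, inverse14 phi chi.

Definition is_inverse (X Y : C) (f : Mor X Y) (g : Mor Y X) : Prop :=
  cmp f g = idm X /\ cmp g f = idm Y.

Definition invertible (X Y : C) (f : Mor X Y) : Prop :=
  exists g : Mor Y X, is_inverse f g.
End Defs.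

(* Main.v *)
Require Import Defs.
Import GRing.Theory.

Local Open Scope ring_scope.

Section H.
Variable C : AddCatInv.

Lemma cmp0m (X Y Z : C) (g : Mor Y Z) : cmp (0 : Mor X Y) g = 0.
Proof.
have h := compDl (0 : Mor X Y) 0 g; rewrite addr0 in h.
apply: (@addrI _ (cmp (0 : Mor X Y) g)); by rewrite addr0 -h.
Qed.

Lemma cmpm0 (X Y Z : C) (f : Mor X Y) : cmp f (0 : Mor Y Z) = 0.
Proof.
have h := compDr f (0 : Mor Y Z) 0; rewrite addr0 in h.
apply: (@addrI _ (cmp f (0 : Mor Y Z))); by rewrite addr0 -h.
Qed.

Lemma cmpBm (X Y Z : C) (f f' : Mor X Y) (g : Mor Y Z) :
  cmp (f - f') g = cmp f g - cmp f' g.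
Proof.
apply: (@addrI _ (cmp f' g)); rewrite -compDl [f' + _]addrC subrK.
by rewrite addrC subrK.
Qed.

Lemma cmpmB (X Y Z : C) (f : Mor X Y) (g g' : Mor Y Z) :
  cmp f (g - g') = cmp f g - cmp f g'.
Proof.
apply: (@addrI _ (cmp f g')); rewrite -compDr [g' + _]addrC subrK.
by rewrite addrC subrK.
Qed.

Lemma adj0 (X Y : C) : adj (0 : Mor X Y) = 0.
Proof.
have h := starD (0 : Mor X Y) 0; rewrite addr0 in h.
apply: (@addrI _ (adj (0 : Mor X Y))); by rewrite addr0 -h.
Qed.

Lemma adjB (X Y : C) (f g : Mor X Y) : adj (f - g) = adj f - adj g.
Proof.
apply: (@addrI _ (adj g)); rewrite -starD [g + _]addrC subrK.
by rewrite addrC subrK.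
Qed.

Lemma adj1 (X : C) : adj (idm X) = idm X.
Proof.
have h : adj (idm X) = cmp (adj (idm X)) (idm X) by rewrite compm1.
rewrite -{2}(starK (idm X)) {2}h star_comp starK compm1 //.
Qed.

Lemma cok_epi (X Y L M : C) (phi : Mor X Y) (lam : Mor Y L)
  (hcok : is_cokernel phi lam) (a b : Mor L M) : cmp lam a = cmp lam b -> a = b.
Proof.
case: hcok => h0 hu e.
have hz : cmp phi (cmp lam a) = 0 by rewrite compA h0 cmp0m.
have [bb [_ hbb]] := hu M (cmp lam a) hz.
by rewrite -(hbb a erefl) -(hbb b e).
Qed.

Lemma part2 (X Y L : C) (phi : Mor X Y) (lam : Mor Y L)
    (hcok : is_cokernel phi lam) (mu : Mor L L)
    (hmu : is_inverse (cmp (adj lam) lam) mu) (psi : Mor Y X)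
    (hpsi : cmp (cmp phi psi) phi = phi) :
   inverse14 phi (cmp (idm Y - cmp (cmp lam mu) (adj lam)) psi).
Proof.
case: (hcok) => h0 hu; case: hmu => m1 m2.
set P := idm Y - _.
have phiP : cmp phi P = phi.
  by rewrite /P cmpmB compm1 !compA h0 !cmp0m subr0.
split; first by rewrite (compA phi P psi) phiP hpsi.
have hz : cmp phi (idm Y - cmp psi phi) = 0.
  by rewrite cmpmB compm1 compA hpsi subrr.
have [beta [hb _]] := hu Y _ hz.
have hpp : cmp psi phi = idm Y - cmp lam beta.
  by rewrite -hb opprB addrC subrK.
have Plam : cmp P lam = 0.
  by rewrite /P cmpBm comp1m -!compA m2 compm1 subrr.
have E : cmp (cmp P psi) phi = P.
  by rewrite -compA hpp cmpmB compm1 compA Plam cmp0m subr0.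
rewrite E.
have amu : adj mu = mu.
  have hA : adj (cmp (adj lam) lam) = cmp (adj lam) lam by rewrite star_comp starK.
  have h1 := f_equal adj m1; rewrite star_comp hA adj1 in h1.
  by rewrite -[RHS]comp1m -h1 -compA m1 compm1.
by rewrite /P adjB adj1 !star_comp starK amu compA.
Qed.

End H.

Theorem lemma3p2 (C : AddCatInv) (X Y L : C) (phi : Mor X Y) (lam : Mor Y L)
    (hcok : is_cokernel phi lam) :
  (invertible14 phi <-> regular phi /\ invertible (cmp (adj lam) lam)) /\
  (forall mu : Mor L L, is_inverse (cmp (adj lam) lam) mu ->
   forall psi : Mor Y X, cmp (cmp phi psi) phi = phi ->
   inverse14 phi (cmp (idm Y - cmp (cmp lam mu) (adj lam)) psi)).
Proof.
split; last by move=> mu hmu psi hpsi; exact: (@part2 C _ _ _ _ _ hcok _ hmu _ hpsi).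
split.
- case=> chi [h1 h2]; split; first by exists chi.
  case: (hcok) => h0 hu.
  have hz : cmp phi (idm Y - cmp chi phi) = 0.
    by rewrite cmpmB compm1 compA h1 subrr.
  have [g [hg _]] := hu Y _ hz.
  have sa : adj (cmp lam g) = cmp lam g by rewrite -hg adjB adj1 h2.
  have gl : cmp g lam = idm L.
    apply: (@cok_epi C _ _ _ _ _ _ hcok); rewrite compA -hg cmpBm comp1m compm1.
    by rewrite -compA h0 cmpm0 subr0.
  have ag : cmp (adj lam) (adj g) = idm L by rewrite -star_comp gl adj1.
  exists (cmp g (adj g)); split.
  + rewrite -compA (compA lam g) -sa star_comp.
    by rewrite (compA (adj lam) (cmp (adj g) (adj lam))) (compA (adj lam) (adj g)) ag comp1m ag.
  + rewrite -compA (compA (adj g) (adj lam) lam) -star_comp sa.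
    by rewrite (compA g (cmp lam g)) (compA g lam g) gl comp1m gl.
- case=> [[psi hpsi] [mu hmu]]; eexists; exact: (@part2 C _ _ _ _ _ hcok _ hmu _ hpsi).
Qed.
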